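(* Let $(\mathbb{X},\dagger)$ be a Moore-Penrose dagger additive category. If $\begin{bmatrix}\alpha&\beta\\ \beta^\dagger&\delta\end{bmatrix}:B\oplus C\to B\oplus C$ is $\dagger$-positive, then $m=\beta^\dagger\circ\alpha^\circ$ is a conditional generator of it, where $\alpha^\circ$ is the Moore-Penrose inverse of $\alpha$.
   Context: A dagger additive category is a dagger category (contravariant identity-on-objects involutive functor $\dagger$) whose hom-sets are abelian groups with bilinear composition and additive $\dagger$, having a zero object and finite biproducts whose projections $\pi_j$ and injections $\iota_j$ satisfy $\pi_j^\dagger=\iota_j$. Maps between biproducts are written as matrices; composition is matrix multiplication and $\dagger$ is transpose with entrywise $\dagger$. An endomorphism $p$ is $\dagger$-positive if $p=\phi^\dagger\circ\phi$ for some map $\phi$. A Moore-Penrose inverse of $f:A\to B$ is a map $f^\circ:B\to A$ with $f f^\circ f=f$, $f^\circ f f^\circ=f^\circ$, $(f f^\circ)^\dagger=f f^\circ$, $(f^\circ f)^\dagger=f^\circ f$ (it is unique when it exists); a Moore-Penrose dagger additive category is one in which every map has a Moore-Penrose inverse. A conditional generator for a $\dagger$-positive map $\begin{bmatrix}\alpha&\beta\\ \beta^\dagger&\delta\end{bmatrix}:B\oplus C\to B\oplus C$ (with $\alpha:B\to B$, $\beta:C\to B$, $\delta:C\to C$) is a map $m:B\to C$ with (i) $m\circ\alpha=\beta^\dagger$ and (ii) $\delta-m\circ\beta$ is $\dagger$-positive. *)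

(* Defs.v *)
From HB Require Import structures.
From mathcomp Require Import all_boot all_algebra.
Set Implicit Arguments. Unset Strict Implicit. Unset Printing Implicit Defensive.
Import GRing.Theory.
Local Open Scope ring_scope.

Record DagAddCat := {
  Ob : Type;
  Mor : Ob -> Ob -> zmodType;
  cmp : forall A B C : Ob, Mor B C -> Mor A B -> Mor A C;
  idm : forall A : Ob, Mor A A;
  dag : forall A B : Ob, Mor A B -> Mor B A;
  compA : forall A B C D (h : Mor C D) (g : Mor B C) (f : Mor A B),
      cmp h (cmp g f) = cmp (cmp h g) f;
  comp1m : forall A B (f : Mor A B), cmp (idm B) f = f;
  compm1 : forall A B (f : Mor A B), cmp f (idm A) = f;
  compDl : forall A B C (g1 g2 : Mor B C) (f : Mor A B),
      cmp (g1 + g2) f = cmp g1 f + cmp g2 f;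
  compDr : forall A B C (g : Mor B C) (f1 f2 : Mor A B),
      cmp g (f1 + f2) = cmp g f1 + cmp g f2;
  dag_id : forall A, dag (idm A) = idm A;
  dag_comp : forall A B C (g : Mor B C) (f : Mor A B),
      dag (cmp g f) = cmp (dag f) (dag g);
  dagK : forall A B (f : Mor A B), dag (dag f) = f;
  dagD : forall A B (f g : Mor A B), dag (f + g) = dag f + dag g;
  zob : Ob;
  zob_init : forall A (f : Mor zob A), f = 0;
  zob_term : forall A (f : Mor A zob), f = 0;
  bip : Ob -> Ob -> Ob;
  pi1 : forall A B, Mor (bip A B) A;
  pi2 : forall A B, Mor (bip A B) B;
  io1 : forall A B, Mor A (bip A B);
  io2 : forall A B, Mor B (bip A B);
  pi1io1 : forall A B, cmp (pi1 A B) (io1 A B) = idm A;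
  pi2io2 : forall A B, cmp (pi2 A B) (io2 A B) = idm B;
  pi1io2 : forall A B, cmp (pi1 A B) (io2 A B) = 0;
  pi2io1 : forall A B, cmp (pi2 A B) (io1 A B) = 0;
  io_pi : forall A B,
      cmp (io1 A B) (pi1 A B) + cmp (io2 A B) (pi2 A B) = idm (bip A B);
  dag_pi1 : forall A B, dag (pi1 A B) = io1 A B;
  dag_pi2 : forall A B, dag (pi2 A B) = io2 A B
}.

Arguments Mor : clear implicits.
Arguments cmp {d A B C}.
Arguments dag {d A B}.
Arguments idm {d}.
Arguments bip {d}.
Arguments pi1 {d}. Arguments pi2 {d}. Arguments io1 {d}. Arguments io2 {d}.

Section Defs.
Variable X : DagAddCat.

(* The 2x2 matrix [[a, b], [c, e]] : A (+) B -> C (+) D, i.e.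
   io1 a pi1 + io1 b pi2 + io2 c pi1 + io2 e pi2. *)
Definition mx2 (A B C D : Ob X) (a : Mor X A C) (b : Mor X B C)
    (c : Mor X A D) (e : Mor X B D) : Mor X (bip A B) (bip C D) :=
  cmp (io1 C D) (cmp a (pi1 A B)) + cmp (io1 C D) (cmp b (pi2 A B))
  + cmp (io2 C D) (cmp c (pi1 A B)) + cmp (io2 C D) (cmp e (pi2 A B)).

Definition dag_positive (A : Ob X) (p : Mor X A A) : Prop :=
  exists (Y : Ob X) (phi : Mor X A Y), p = cmp (dag phi) phi.

Definition is_MP_inverse (A B : Ob X) (f : Mor X A B) (g : Mor X B A) : Prop :=
  [/\ cmp f (cmp g f) = f,
      cmp g (cmp f g) = g,
      dag (cmp f g) = cmp f g
    & dag (cmp g f) = cmp g f].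

Definition MP_category : Prop :=
  forall (A B : Ob X) (f : Mor X A B), exists g : Mor X B A, is_MP_inverse f g.

Definition conditional_generator (B C : Ob X) (alpha : Mor X B B)
    (beta : Mor X C B) (delta : Mor X C C) (m : Mor X B C) : Prop :=
  cmp m alpha = dag beta /\ dag_positive (delta - cmp m beta).

End Defs.

(* Main.v *)
Require Import Defs.
From mathcomp Require Import all_boot all_algebra.
Import GRing.Theory.
Local Open Scope ring_scope.

Section Aux.
Variable X : DagAddCat.

Lemma cmp0r (A B C : Ob X) (g : Mor X B C) : cmp g (0 : Mor X A B) = 0.
Proof. apply: (addrI (cmp g 0)); by rewrite -compDr !addr0. Qed.
Lemma cmp0l (A B C : Ob X) (f : Mor X A B) : cmp (0 : Mor X B C) f = 0.
Proof. apply: (addrI (cmp 0 f)); by rewrite -compDl !addr0. Qed.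
Lemma cmpNr (A B C : Ob X) (g : Mor X B C) (f : Mor X A B) : cmp g (- f) = - cmp g f.
Proof. apply: (addrI (cmp g f)); by rewrite -compDr !subrr cmp0r. Qed.
Lemma cmpNl (A B C : Ob X) (g : Mor X B C) (f : Mor X A B) : cmp (- g) f = - cmp g f.
Proof. apply: (addrI (cmp g f)); by rewrite -compDl !subrr cmp0l. Qed.
Lemma cmpBr (A B C : Ob X) (g : Mor X B C) (f1 f2 : Mor X A B) :
  cmp g (f1 - f2) = cmp g f1 - cmp g f2.
Proof. by rewrite compDr cmpNr. Qed.
Lemma cmpBl (A B C : Ob X) (g1 g2 : Mor X B C) (f : Mor X A B) :
  cmp (g1 - g2) f = cmp g1 f - cmp g2 f.
Proof. by rewrite compDl cmpNl. Qed.
Lemma dag0 (A B : Ob X) : dag (0 : Mor X A B) = 0.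
Proof. apply: (addrI (dag 0)); by rewrite -dagD !addr0. Qed.
Lemma dagN (A B : Ob X) (f : Mor X A B) : dag (- f) = - dag f.
Proof. apply: (addrI (dag f)); by rewrite -dagD !subrr dag0. Qed.
Lemma dagB (A B : Ob X) (f g : Mor X A B) : dag (f - g) = dag f - dag g.
Proof. by rewrite dagD dagN. Qed.
Lemma dag_io1 (A B : Ob X) : dag (io1 A B) = pi1 A B.
Proof. by rewrite -dag_pi1 dagK. Qed.
Lemma dag_io2 (A B : Ob X) : dag (io2 A B) = pi2 A B.
Proof. by rewrite -dag_pi2 dagK. Qed.

Ltac simp := rewrite !Defs.compA ?pi1io1 ?pi2io2 ?pi1io2 ?pi2io1 ?comp1m ?cmp0l;
  rewrite -!Defs.compA ?pi1io1 ?pi2io2 ?pi1io2 ?pi2io1 ?compm1 ?cmp0r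
  ?addr0 ?add0r.

Lemma mx2_11 (A B C D : Ob X) a b c e :
  cmp (pi1 C D) (cmp (@mx2 X A B C D a b c e) (io1 A B)) = a.
Proof. rewrite /mx2 !compDl !compDr; simp. by []. Qed.
Lemma mx2_12 (A B C D : Ob X) a b c e :
  cmp (pi1 C D) (cmp (@mx2 X A B C D a b c e) (io2 A B)) = b.
Proof. rewrite /mx2 !compDl !compDr; simp. by []. Qed.
Lemma mx2_22 (A B C D : Ob X) a b c e :
  cmp (pi2 C D) (cmp (@mx2 X A B C D a b c e) (io2 A B)) = e.
Proof. rewrite /mx2 !compDl !compDr; simp. by []. Qed.

Lemma dagdag0 (HMP : MP_category X) (A Y : Ob X) (psi : Mor X A Y) :
  cmp (dag psi) psi = 0 -> psi = 0.
Proof.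
move=> H; have [g [h1 _ h3 _]] := HMP _ _ psi.
by rewrite -h1 Defs.compA -h3 dag_comp -Defs.compA H cmp0r.
Qed.
End Aux.

Theorem mainTheorem10 (X : DagAddCat) (HMP : MP_category X)
    (B C : Ob X) (alpha : Mor X B B) (beta : Mor X C B) (delta : Mor X C C)
    (alpha_o : Mor X B B) (Halpha_o : is_MP_inverse alpha alpha_o) :
  dag_positive (mx2 alpha beta (dag beta) delta) ->
  conditional_generator alpha beta delta (cmp (dag beta) alpha_o).
Proof.
case=> Y [phi HP].
set p1 := cmp phi (io1 B C); set p2 := cmp phi (io2 B C).
have Ea : alpha = cmp (dag p1) p1.
  by rewrite -(@mx2_11 X _ _ _ _ alpha beta (dag beta) delta) HP /p1 dag_comp dag_io1 !Defs.compA.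
have Eb : beta = cmp (dag p1) p2.
  by rewrite -(@mx2_12 X _ _ _ _ alpha beta (dag beta) delta) HP /p1 /p2 dag_comp dag_io1 !Defs.compA.
have Ed : delta = cmp (dag p2) p2.
  by rewrite -(@mx2_22 X _ _ _ _ alpha beta (dag beta) delta) HP /p2 dag_comp dag_io2 !Defs.compA.
case: Halpha_o => h1 h2 h3 h4.
have Hp1 : cmp p1 (cmp alpha_o alpha) = p1.
  apply/eqP; rewrite -subr_eq0; apply/eqP.
  have -> : cmp p1 (cmp alpha_o alpha) - p1 = cmp p1 (cmp alpha_o alpha - idm B).
    by rewrite cmpBr compm1.
  apply: (@dagdag0 X HMP).
  rewrite dag_comp -Defs.compA (Defs.compA (dag p1)) -Ea dagB h4 dag_id cmpBr compm1 h1 subrr; exact: cmp0r.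
have Hi : cmp (cmp (dag beta) alpha_o) alpha = dag beta.
  by rewrite -Defs.compA Eb dag_comp dagK -Defs.compA Hp1.
split=> //.
set m := cmp (dag beta) alpha_o in Hi *.
clearbody m p1 p2.
exists Y; exists (p2 - cmp p1 (dag m)).
rewrite dagB !cmpBl !cmpBr dag_comp dagK.
have E1 : cmp (cmp m (dag p1)) (cmp p1 (dag m)) = cmp (dag p2) (cmp p1 (dag m)).
  by rewrite -Defs.compA (Defs.compA (dag p1)) -Ea Defs.compA Hi Eb dag_comp dagK -Defs.compA.
have E2 : cmp (cmp m (dag p1)) p2 = cmp m beta by rewrite Eb Defs.compA.
rewrite E1 E2 Ed.
by rewrite opprB addrA subrK.
Qed.
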